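(* Let $\mathcal I$ be an ideal on $\mathbb N$ which is analytic or coanalytic. Then for any series $\sum_n x_n$ in a Banach space $X$, the set $$A(\mathcal I):=\left\{t \in \{0,1\}^{\mathbb N} \colon \sum_n t(n)x_n \text{ is } \mathcal I\text{-convergent}\right\}$$ is $\lambda$-measurable and $\lambda(A(\mathcal I))$ is either $0$ or $1$. Moreover, if $\sum_n x_n$ is $\mathcal I$-divergent, then $\lambda(A(\mathcal I))=0$.
   Context: $\mathbb N=\{1,2,\dots\}$. An ideal on $\mathbb N$ is a family $\mathcal I\subset\mathcal P(\mathbb N)$ closed under finite unions and subsets, with $\mathbb N\notin\mathcal I$ and containing all finite subsets of $\mathbb N$; via characteristic functions it is regarded as a subset of the Cantor space $\{0,1\}^{\mathbb N}$, and ''analytic''/''coanalytic'' refer to this subset. A sequence $(y_n)$ in a normed space is $\mathcal I$-convergent to $y$ if $\{n:\|y_n-y\|>\varepsilon\}\in\mathcal I$ for every $\varepsilon>0$; a series is $\mathcal I$-convergent if its sequence of partial sums is $\mathcal I$-convergent to some element, and $\mathcal I$-divergent otherwise. $\lambda$ is the product probability measure on $\{0,1\}^{\mathbb N}$ generated by the measure giving mass $1/2$ to each of $0$ and $1$ (the Haar measure on the Cantor group). Banach spaces are over $\mathbb R$. *)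

(* Defs.v *)
From HB Require Import structures.
From mathcomp Require Import all_boot all_order all_algebra.
From mathcomp Require Import all_classical all_reals all_analysis.
Set Implicit Arguments. Unset Strict Implicit. Unset Printing Implicit Defensive.
Import Order.TTheory GRing.Theory Num.Theory.
Import numFieldNormedType.Exports.
Local Open Scope classical_set_scope.
Local Open Scope ring_scope.

(* N = {1,2,...} is relabelled as nat = {0,1,2,...} (shift by one). *)

Definition is_ideal (I : set (set nat)) : Prop :=
  [/\ (forall A B, I A -> I B -> I (A `|` B)),
      (forall A B, B `<=` A -> I A -> I B),
      ~ I setT &
      (forall A, finite_set A -> I A)].

Definition ideal_code (I : set (set nat)) : set cantor_space :=
  [set t | I [set n | t n]].

Definition baire_space : Type := prod_topology (fun _ : nat => nat).

Definition analytic (T : topologicalType) (S : set T) : Prop :=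
  S = set0 \/ exists f : baire_space -> T, continuous f /\ S = f @` setT.

Definition coanalytic (T : topologicalType) (S : set T) : Prop :=
  analytic (~` S).

Definition I_converges_to (R : realType) (X : normedModType R)
  (I : set (set nat)) (y : nat -> X) (l : X) : Prop :=
  forall e : R, 0 < e -> I [set n | e < `|y n - l|].

Definition partial_sums (R : realType) (X : normedModType R) (x : nat -> X)
  : nat -> X := fun n => \sum_(i < n.+1) x i.

Definition I_convergent_series (R : realType) (X : normedModType R)
  (I : set (set nat)) (x : nat -> X) : Prop :=
  exists l : X, I_converges_to I (partial_sums x) l.

(** The Haar (product, fair coin) measure lambda on {0,1}^nat, built by the
    Caratheodory construction from the premeasure giving mass 2^-n to each
    cylinder determined by a word of length n.  lambda-measurable sets are the
    Caratheodory-measurable sets for the induced outer measure (these are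
    exactly the sets measurable for the completion of lambda). *)
Definition cylinder (s : seq bool) : set cantor_space :=
  [set t | forall i, (i < size s)%N -> t i = nth false s i].

Definition lambda_outer (R : realType) (A : set cantor_space) : \bar R :=
  ereal_inf [set r : \bar R | exists s : nat -> seq bool,
    A `<=` \bigcup_i cylinder (s i) /\
    r = (\sum_(0 <= i <oo) (((2 : R)^-1) ^+ size (s i))%:E)%E].

Definition lambda_measurable (R : realType) (A : set cantor_space) : Prop :=
  caratheodory_measurable (@lambda_outer R) A.

(* Main.v *)
Require Import Defs.
From HB Require Import structures.
From mathcomp Require Import all_boot all_order all_algebra.
From mathcomp Require Import all_classical all_reals all_analysis.
From mathcomp Require Import ring lra.
Import Order.TTheory GRing.Theory Num.Theory.
Import numFieldNormedType.Exports.
Local Open Scope classical_set_scope.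
Local Open Scope ring_scope.

Set Implicit Arguments. Unset Strict Implicit. Unset Printing Implicit Defensive.

Section Lam.
Variable R : realType.
Local Open Scope ereal_scope.

Definition wt (s : seq bool) : \bar R := ((((2:R)^-1) ^+ size s)%:E).
Local Notation lam := (@lambda_outer R).

Lemma half_ge0 : (0 <= (2:R)^-1)%R.
Proof. by rewrite invr_ge0. Qed.

Lemma wt_ge0 s : 0 <= wt s.
Proof. by rewrite lee_fin exprn_ge0 // half_ge0. Qed.

Lemma half_small (e : R) : (0 < e)%R -> exists k, (((2:R)^-1)^+k < e)%R.
Proof.
move=> e0; case: (near_infty_natSinv_expn_lt (PosNum e0)) => N _ HN.
by exists N; have := HN N (leqnn N); rewrite /= div1r exprVn.
Qed.

Lemma lam_le A (s : nat -> seq bool) :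
  A `<=` \bigcup_i cylinder (s i) -> lam A <= \sum_(0 <= i <oo) wt (s i).
Proof. by move=> As; apply: ereal_inf_lbound; exists s. Qed.

Lemma lam_ge0 A : 0 <= lam A.
Proof.
apply: le_ereal_inf_tmp => _ [s [_ ->]]; apply: nneseries_ge0 => n _ _.
exact: wt_ge0.
Qed.

Definition tinyseq k i : seq bool := nseq (i + k).+1 false.

Lemma tiny_sum k : \sum_(0 <= i <oo) wt (tinyseq k i) <= (((2:R)^-1)^+k)%:E.
Proof.
have := @epsilon_trick R (fun=> 0) (((2:R)^-1)^+k)%R xpredT (fun=> lexx 0)
  (exprn_ge0 _ half_ge0).
move=> H; apply: (le_trans _ (le_trans H _)).
  apply: lee_nneseries; first by move=> *; exact: wt_ge0.
  move=> i _; rewrite add0e /wt size_nseq lee_fin le_eqVlt; apply/orP; left.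
  apply/eqP; rewrite natrX -exprVn -exprD.
  by rewrite addnC addnS.
by rewrite eseries0 // add0e.
Qed.

Lemma lam_le_cyl_tiny A v k : A `<=` cylinder v ->
  lam A <= wt v + (((2:R)^-1)^+k)%:E.
Proof.
move=> Av.
pose s i := if i is i'.+1 then tinyseq k i' else v.
apply: le_trans (lam_le (s := s) _) _.
  by move=> t /Av ct; exists 0%N.
rewrite nneseries_recl //; last by move=> *; exact: wt_ge0.
rewrite leeD2l // -nneseries_addn; last by move=> *; exact: wt_ge0.
apply: le_trans (tiny_sum k); apply: lee_nneseries.
  by move=> *; exact: wt_ge0.
by move=> i _; rewrite addn1.
Qed.

Lemma lam_cyl_le v : lam (cylinder v) <= wt v.
Proof.
apply/lee_addgt0Pr => e e0; have [k hk] := half_small e0.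
apply: le_trans (lam_le_cyl_tiny k (@subset_refl _ _)) _.
by rewrite leeD2l // lee_fin ltW.
Qed.

Lemma lam_fin A : lam A \is a fin_num.
Proof.
rewrite ge0_fin_numE ?lam_ge0 //.
apply: le_lt_trans (lam_le_cyl_tiny 0 (v := [::]) _) _.
  by move=> t _ i; rewrite ltn0.
by rewrite /wt expr0 -EFinD ltry.
Qed.

Lemma lam_le1 A : lam A <= 1.
Proof.
apply/lee_addgt0Pr => e e0; have [k hk] := half_small e0.
apply: le_trans (lam_le_cyl_tiny k (v := [::]) _) _.
  by move=> t _ i; rewrite ltn0.
by rewrite /wt expr0 leeD2l // lee_fin ltW.
Qed.

Lemma lam0 : lam set0 = 0.
Proof.
apply/eqP; rewrite eq_le lam_ge0 andbT; apply/lee_addgt0Pr => e e0.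
have [k hk] := half_small e0.
apply: le_trans (lam_le (s := tinyseq k) _) _; first by [].
by rewrite add0e; apply: le_trans (tiny_sum k) _; rewrite lee_fin ltW.
Qed.

Lemma lam_mono : {homo lam : A B / A `<=` B >-> A <= B}.
Proof.
move=> A B AB; apply: le_ereal_inf => _ [s [Bs ->]]; exists s; split => //.
exact: subset_trans Bs.
Qed.

Lemma lam_adherent A (e : R) : (0 < e)%R -> exists s : nat -> seq bool,
  A `<=` \bigcup_i cylinder (s i) /\
  \sum_(0 <= i <oo) wt (s i) <= lam A + e%:E.
Proof.
move=> e0; have /(lb_ereal_inf_adherent e0) := lam_fin A.
by move=> [_ [s [As ->]] H]; exists s; split => //; exact: ltW.
Qed.

Lemma lam_sigma_subadditive : sigma_subadditive lam.
Proof.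
move=> A.
suff add2e (e : {posnum R}) :
    lam (\bigcup_n A n) <= \sum_(i <oo) lam (A i) + e%:num%:E.
  by apply/lee_addgt0Pr => _/posnumP[].
rewrite (le_trans _ (epsilon_trick _ _ _))//; last by move=> n; exact: lam_ge0.
pose P n (s : nat -> seq bool) := A n `<=` \bigcup_i cylinder (s i) /\
  \sum_(0 <= k <oo) wt (s k) <= lam (A n) + (e%:num / (2 ^ n.+1)%:R)%:E.
have [G PG] : {G : (nat -> seq bool)^nat & forall n, P n (G n)}.
  apply: (@choice _ _ P) => n; apply: lam_adherent.
  by apply: divr_gt0 => //; rewrite ltr0n expn_gt0.
have muG_ge0 x : 0 <= (wt \o uncurry G) x by exact: wt_ge0.
apply: (@le_trans _ _ (\esum_(i in setT) (wt \o uncurry G) i)).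
  apply: ereal_inf_lbound => /=.
  have /card_esym/ppcard_eqP[f] := card_nat2.
  exists (uncurry G \o f); split.
    move=> t [i _ /(PG i).1 [j _ Bijt]].
    exists (f^-1%FUN (i, j)) => //=.
    by rewrite invK ?inE.
  rewrite -(esum_pred_image (wt \o uncurry G) _ xpredT) ?[fun=> _]set_true//.
  congr (esum _ _); apply/seteqP; split => // y _.
  by exists (f^-1%FUN y) => //; rewrite invK ?inE.
rewrite (_ : esum _ _ = \sum_(i <oo) \sum_(j <oo ) wt (G i j)); last first.
  pose J : nat -> set (nat * nat) := fun i => [set (i, j) | j in setT].
  rewrite (_ : setT = \bigcup_k J k); last first.
    by rewrite predeqE => -[a b]; split => // _; exists a => //; exists b.
  rewrite esum_bigcupT /=; last 2 first.
    - apply/trivIsetP => i j _ _ ij.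
      rewrite predeqE => -[n m] /=; split => //= -[] [_] _ [<-{n} _].
      by move=> [m' _] [] /esym/eqP; rewrite (negbTE ij).
    - by move=> /= [n m]; exact: wt_ge0.
  rewrite -(image_id [set: nat]) -fun_true esum_pred_image//; last first.
    move=> n _; apply: esum_ge0 => x _; exact: wt_ge0.
  apply: eq_eseriesr => /= j _.
  rewrite -(esum_pred_image (wt \o uncurry G) (pair j) predT)//=; last 2 first.
    by move=> *; exact: wt_ge0.
    by move=> ? ? _ _; exact: (@can_inj _ _ _ snd).
  by congr esum; rewrite predeqE => -[a b]; split; move=> [i _ <-]; exists i.
apply: lee_nneseries => //.
  by move=> n _ _; apply: nneseries_ge0 => m *; exact: wt_ge0.
by move=> n _; exact: (PG n).2.
Qed.

HB.instance Definition _ := isOuterMeasure.Build R cantor_space lam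
  lam0 lam_ge0 lam_mono lam_sigma_subadditive.

End Lam.

Section Cyl.
Variable R : realType.
Local Open Scope ereal_scope.
Local Notation lam := (@lambda_outer R).
Local Notation wt := (@wt R).

Lemma cyl_nil : cylinder [::] = setT.
Proof. by apply/seteqP; split => // t _ i; rewrite ltn0. Qed.

Lemma cyl_rcons u b :
  cylinder (rcons u b) = cylinder u `&` [set t | t (size u) = b].
Proof.
apply/seteqP; split => t.
  move=> H; split; last by have := H (size u); rewrite size_rcons ltnSn nth_rcons ltnn eqxx; apply.
  move=> i iu; have := H i; rewrite size_rcons ltnS nth_rcons iu; apply; exact: ltnW.
move=> [H1 H2] i; rewrite size_rcons ltnS nth_rcons leq_eqVlt.
case/orP => [/eqP ->|iu]; first by rewrite ltnn eqxx.
by rewrite iu; apply: H1.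
Qed.

Lemma cyl_take_sub u s : take (size s) u = s -> cylinder u `<=` cylinder s.
Proof.
move=> us t H i iS; have su : (size s <= size u)%N.
  by rewrite -us size_take; case: ltnP => //; exact: ltnW.
rewrite -us nth_take //; apply: H; exact: leq_trans iS su.
Qed.

Lemma cyl_meet_take u s t : cylinder u t -> cylinder s t ->
  (size s <= size u)%N -> take (size s) u = s.
Proof.
move=> Hu Hs su.
have e : size (take (size s) u) = size s.
  by rewrite size_take; case: ltnP => // h; apply/eqP; rewrite eqn_leq h su.
apply: (@eq_from_nth _ false) => // i; rewrite e => iS.
rewrite nth_take //.
have iu : (i < size u)%N by exact: leq_trans iS su.
by rewrite -(Hu i iu) (Hs i iS).
Qed.

Lemma wt_rcons u b : wt (rcons u b) = ((2:R)^-1)%:E * wt u.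
Proof. by rewrite /wt size_rcons exprS EFinM. Qed.

Lemma wt_split u b : wt u = wt (rcons u b) + wt (rcons u (~~ b)).
Proof.
rewrite /wt !size_rcons -EFinD exprS; by congr (_%:E); field.
Qed.

Lemma cyl_sub_cat u w : cylinder (u ++ w) `<=` cylinder u.
Proof. by apply: cyl_take_sub; rewrite take_size_cat. Qed.

Lemma lam_cyl_cat w u :
  lam (cylinder u `&` cylinder (u ++ w)) + lam (cylinder u `&` ~` cylinder (u ++ w))
  <= wt u.
Proof.
elim: w u => [|b w IH] u.
  rewrite cats0 setIid setICr outer_measure0 adde0; exact: lam_cyl_le.
rewrite (setIidr (@cyl_sub_cat u (b :: w))).
have -> : u ++ b :: w = rcons u b ++ w by rewrite cat_rcons.
have := IH (rcons u b); rewrite (setIidr (@cyl_sub_cat _ w)) => IH'.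
rewrite (wt_split u b).
have sub : cylinder u `&` ~` cylinder (rcons u b ++ w) `<=`
   cylinder (rcons u (~~ b)) `|` (cylinder (rcons u b) `&` ~` cylinder (rcons u b ++ w)).
  move=> t [ut nt]; case: (boolP (t (size u) == b)) => /eqP tb.
    by right; split => //; rewrite cyl_rcons.
  left; rewrite cyl_rcons; split => //=.
  by move: (t (size u)) tb => x; destruct x, b.
apply: le_trans (leeD2l _ (le_trans (le_outer_measure _ _ _ sub)
  (outer_measureU2 lam _ _))) _.
rewrite addeCA addeC; apply: leeD => //; exact: lam_cyl_le.
Qed.

Lemma lam_cyl_pair u s :
  lam (cylinder u `&` cylinder s) + lam (cylinder u `&` ~` cylinder s) <= wt u.
Proof.
case: (leqP (size s) (size u)) => [su|us].
  case: (boolP (take (size s) u == s)) => [/eqP h|h].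
    have -> : cylinder u `&` ~` cylinder s = set0.
      by apply/seteqP; split => // t [/(cyl_take_sub h)].
    rewrite (setIidl (cyl_take_sub h)) outer_measure0 adde0.
    exact: lam_cyl_le.
  have -> : cylinder u `&` cylinder s = set0.
    apply/seteqP; split => // t [Hu Hs]; move/negP: h; apply.
    by apply/eqP; exact: cyl_meet_take Hu Hs su.
  rewrite outer_measure0 add0e; apply: le_trans (lam_cyl_le _ _).
  by apply: le_outer_measure => t [].
case: (boolP (take (size u) s == u)) => [/eqP h|h].
  have -> : s = u ++ drop (size u) s by rewrite -{1}(cat_take_drop (size u) s) h.
  exact: lam_cyl_cat.
have -> : cylinder u `&` cylinder s = set0.
  apply/seteqP; split => // t [Hu Hs]; move/negP: h; apply.
  by apply/eqP; apply: cyl_meet_take Hs Hu _; exact: ltnW.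
rewrite outer_measure0 add0e; apply: le_trans (lam_cyl_le _ _).
by apply: le_outer_measure => t [].
Qed.

Lemma cyl_cara s : lambda_measurable R (cylinder s).
Proof.
apply: le_caratheodory_measurable => X.
apply/lee_addgt0Pr => e e0.
have [c [Xc Hc]] := lam_adherent X e0.
apply: le_trans Hc.
set C := cylinder s.
have h1 : lam (X `&` C) <= \sum_(0 <= i <oo) lam (cylinder (c i) `&` C).
  apply: le_trans (outer_measure_sigma_subadditive lam (fun i => cylinder (c i) `&` C)).
  by apply: le_outer_measure => t [/Xc [i _ ct] Ct]; exists i.
have h2 : lam (X `&` ~` C) <= \sum_(0 <= i <oo) lam (cylinder (c i) `&` ~` C).
  apply: le_trans (outer_measure_sigma_subadditive lam (fun i => cylinder (c i) `&` ~` C)).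
  by apply: le_outer_measure => t [/Xc [i _ ct] Ct]; exists i.
apply: le_trans (leeD h1 h2) _.
rewrite -nneseriesD; [|by move=> *; exact: outer_measure_ge0|by move=> *; exact: outer_measure_ge0].
apply: lee_nneseries => [*|i _]; last exact: lam_cyl_pair.
by apply: adde_ge0; exact: outer_measure_ge0.
Qed.

End Cyl.

Section Tot.
Variable R : realType.
Local Open Scope ereal_scope.
Local Notation lam := (@lambda_outer R).

Definition w (s : seq bool) : R := (((2:R)^-1)^+(size s))%R.

Lemma w_ge0 s : (0 <= w s)%R.
Proof. by rewrite /w exprn_ge0 // invr_ge0. Qed.

Lemma fin_cover_ge1 n (L : seq (seq bool)) : all (fun s => size s <= n)%N L ->
  (forall t : cantor_space, exists2 s, s \in L & cylinder s t) ->
  (1 <= \sum_(s <- L) w s)%R.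
Proof.
elim: n L => [|n IH] L Ln cov; (case: (boolP ([::] \in L)) => nil;
  first by rewrite (big_rem _ nil) /= /w expr0 lerDl; apply: sumr_ge0 => *; exact: w_ge0).
  have [s sL _] := cov (fun=> false).
  move/allP: Ln => /(_ _ sL); rewrite leqn0 size_eq0 => /eqP s0.
  by move: nil; rewrite -s0 sL.
pose Lb b := [seq behead s | s <- L & head false s == b].
have covb b : forall t : cantor_space, exists2 s, s \in Lb b & cylinder s t.
  move=> t; pose t' : cantor_space := fun i => if i is i'.+1 then t i' else b.
  have [[|x s'] sL cs] := cov t'; first by move: nil; rewrite sL.
  have xb : x = b by have := cs 0%N erefl.
  exists s'.
    by apply/mapP; exists (x :: s'); rewrite // mem_filter /= sL xb eqxx.
  by move=> i is'; have := cs i.+1 is'.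
have allb b : all (fun s => size s <= n)%N (Lb b).
  apply/allP => s /mapP [s0 + ->]; rewrite mem_filter => /andP [_ s0L].
  move/allP: Ln => /(_ _ s0L); rewrite size_behead; case: (size s0) => //.
have sumb b : (\sum_(s <- L | head false s == b) w s = (2:R)^-1 * \sum_(s <- Lb b) w s)%R.
  rewrite big_map big_filter mulr_sumr big_seq_cond [RHS]big_seq_cond.
  apply: eq_bigr => -[|x s] /andP [sL _]; first by move: nil; rewrite sL.
  by rewrite /w /= exprS.
rewrite (bigID (fun s => head false s == true)) /=.
have -> : (\sum_(i <- L | head false i != true) w i = \sum_(s <- L | head false s == false) w s)%R.
  by apply: eq_bigl => s; case: (head false s).
rewrite !sumb.
have h1 := IH _ (allb true) (covb true).
have h2 := IH _ (allb false) (covb false).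
lra.
Qed.

Lemma cyl_open s : open (cylinder s : set cantor_space).
Proof.
elim/last_ind: s => [|u b IH]; first by rewrite cyl_nil; exact: openT.
rewrite cyl_rcons; apply: openI => //.
have -> : [set t : cantor_space | t (size u) = b] = proj (size u) @^-1` [set b] by [].
apply: open_comp; last exact: discrete_open.
by move=> t _; exact: proj_continuous.
Qed.

Lemma cantor_fin_cover (s : nat -> seq bool) :
  [set: cantor_space] `<=` \bigcup_i cylinder (s i) ->
  exists N, forall t : cantor_space, exists2 i, (i < N)%N & cylinder (s i) t.
Proof.
move=> cov.
have := cantor_space_compact; rewrite compact_cover => /(_ nat setT (fun i => cylinder (s i))).
case.
- by move=> i _; exact: cyl_open.
- by move=> t _; have [i _ ?] := cov t I; exists i.
move=> D _ HD.
exists (\max_(i <- finmap.enum_fset D) i).+1 => t.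
have [i iD ?] := HD t I; exists i => //.
rewrite ltnS; exact: (@leq_bigmax_seq _ (finmap.enum_fset D) xpredT id i iD).
Qed.

Lemma lam_setT : lam setT = 1.
Proof.
apply/eqP; rewrite eq_le lam_le1 /=; apply: le_ereal_inf_tmp => _ [s [cov ->]].
have [N HN] := cantor_fin_cover cov.
apply: le_trans (nneseries_lim_ge N _); last by move=> *; exact: wt_ge0.
rewrite (_ : \sum_(0 <= i < N) wt R (s i) = (\sum_(x <- map s (iota 0 N)) w x)%:E).
  rewrite lee_fin; apply: (@fin_cover_ge1 (\max_(x <- map s (iota 0 N)) size x)).
    by apply/allP => x xL; exact: (@leq_bigmax_seq _ (map s (iota 0 N)) xpredT size x xL).
  move=> t; have [i iN ci] := HN t; exists (s i) => //.
  by apply: map_f; rewrite mem_iota.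
rewrite big_map -sumEFin /index_iota subn0.
by apply: eq_bigr.
Qed.

End Tot.

Section ZO.
Variable R : realType.
Local Open Scope ereal_scope.
Local Notation lam := (@lambda_outer R).

Definition lr (A : set cantor_space) : R := fine (lam A).
Lemma lamE A : lam A = (lr A)%:E.
Proof. by rewrite /lr fineK // lam_fin. Qed.
Lemma lr_ge0 A : (0 <= lr A)%R.
Proof. by rewrite -lee_fin -lamE lam_ge0. Qed.
Lemma lr_le1 A : (lr A <= 1)%R.
Proof. by rewrite -lee_fin -lamE lam_le1. Qed.
Lemma lr_mono A B : A `<=` B -> (lr A <= lr B)%R.
Proof. by move=> AB; rewrite -lee_fin -!lamE; exact: le_outer_measure. Qed.

Definition xr (t0 t : cantor_space) : cantor_space := fun i => t i (+) t0 i.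
Definition xs (t0 : cantor_space) (s : seq bool) : seq bool :=
  mkseq (fun i => nth false s i (+) t0 i) (size s).

Lemma xr_invol t0 t : xr t0 (xr t0 t) = t.
Proof. by apply: funext => i; rewrite /xr addbK. Qed.

Lemma xr_cyl t0 s : xr t0 @^-1` cylinder s = cylinder (xs t0 s).
Proof.
apply/seteqP; split => t /= H i.
  rewrite /xs size_mkseq => iS.
  by rewrite nth_mkseq // -(H i iS) /xr addbK.
move=> iS; have iS' : (i < size (xs t0 s))%N by rewrite /xs size_mkseq.
by rewrite /xr (H i iS') nth_mkseq // addbK.
Qed.

Lemma lam_xr_le t0 B : lam (xr t0 @^-1` B) <= lam B.
Proof.
apply: le_ereal_inf_tmp => _ [s [Bs ->]].
apply: le_trans (@lam_le R _ (fun i => xs t0 (s i)) _) _.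
  move=> t /Bs [i _ ci]; exists i => //; rewrite -xr_cyl; exact: ci.
by apply: lee_nneseries => [*|i _]; [exact: wt_ge0|rewrite /wt /xs size_mkseq].
Qed.

Lemma lam_xr t0 B : lam (xr t0 @^-1` B) = lam B.
Proof.
apply/eqP; rewrite eq_le lam_xr_le /=.
have {1}-> : B = xr t0 @^-1` (xr t0 @^-1` B).
  by apply/seteqP; split => t; rewrite /= xr_invol.
exact: lam_xr_le.
Qed.

Definition ej (j : nat) : cantor_space := fun i => i == j.

Section H.
Variable H : set cantor_space.
Hypothesis Hinv : forall j, xr (ej j) @^-1` H = H.

Lemma lam_H_cyl s : lr (H `&` cylinder s) = (((2:R)^-1)^+(size s) * lr H)%R.
Proof.
elim/last_ind: s => [|u b IH]; first by rewrite cyl_nil setIT expr0 mul1r.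
have hc := cyl_cara R (rcons u false) (H `&` cylinder u).
have e1 : H `&` cylinder u `&` cylinder (rcons u false) = H `&` cylinder (rcons u false).
  rewrite -setIA; congr (_ `&` _); rewrite cyl_rcons setIA setIid //.
have e2 : H `&` cylinder u `&` ~` cylinder (rcons u false) = H `&` cylinder (rcons u true).
  rewrite -setIA; congr (_ `&` _); rewrite !cyl_rcons; apply/seteqP; split => t /=.
    by move=> [cu /not_andP [//|]] tu; split => //; move: tu; case: (t (size u)).
  by move=> [cu tu]; split => // -[_]; rewrite tu.
have e3 : xr (ej (size u)) @^-1` (H `&` cylinder (rcons u true)) =
          H `&` cylinder (rcons u false).
  rewrite preimage_setI Hinv !cyl_rcons; apply/seteqP; split => t /= [Ht [cu tu]].
    split => //; split; last by move: tu; rewrite /xr /ej eqxx; case: (t (size u)).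
    move=> i iu; rewrite -(cu i iu) /xr /ej.
    by rewrite (ltn_eqF iu) addbF.
  split => //; split; last by rewrite /xr /ej eqxx tu.
  move=> i iu; rewrite /xr /ej (cu i iu).
  by rewrite (ltn_eqF iu) addbF.
have e4 := lam_xr (ej (size u)) (H `&` cylinder (rcons u true)).
rewrite e3 in e4.
have hc2 : lr (H `&` cylinder u) =
    (lr (H `&` cylinder (rcons u false)) + lr (H `&` cylinder (rcons u false)))%R.
  by apply: EFin_inj; rewrite EFinD -!lamE hc e1 e2 e4.
have e5 : lr (H `&` cylinder (rcons u true)) = lr (H `&` cylinder (rcons u false)).
  by rewrite /lr e4.
rewrite size_rcons exprS.
move: IH; rewrite hc2 => IH.
case: b; [rewrite e5|]; lra.
Qed.

Lemma zero_one : lam H = 0 \/ lam H = 1.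
Proof.
rewrite lamE; set a := lr H.
suff : (a <= a * a)%R.
  have := lr_ge0 H; have := lr_le1 H; rewrite -/a => a1 a0 aa.
  have [->|an0] := eqVneq a 0%R; [by left|right].
  have ap : (0 < a)%R by rewrite lt_neqAle eq_sym an0 a0.
  congr (_%:E); nra.
apply/ler_addgt0Pr => e e0.
have [s [Hs Hsum]] := lam_adherent H e0.
have : lam H <= (a * (a + e))%:E.
  apply: le_trans (_ : lam H <= lam (\bigcup_i (H `&` cylinder (s i)))) _.
    by apply: le_outer_measure => t Ht; have [i _ ci] := Hs t Ht; exists i.
  apply: le_trans (outer_measure_sigma_subadditive lam _) _.
  have -> : \sum_(0 <= i <oo) lam (H `&` cylinder (s i)) =
      \sum_(0 <= i <oo) (a%:E * wt R (s i)).
    by apply: eq_eseriesr => i _; rewrite lamE lam_H_cyl /wt -EFinM mulrC.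
  rewrite nneseriesZl; last by move=> *; exact: wt_ge0.
  rewrite EFinM; apply: lee_wpmul2l; first by rewrite lee_fin lr_ge0.
  by rewrite EFinD /a -lamE.
rewrite lamE -/a lee_fin => h.
have := lr_le1 H; have := lr_ge0 H; rewrite -/a => a0 a1.
nra.
Qed.

End H.
End ZO.

Section Meas.
Variable R : realType.
Local Open Scope ereal_scope.
Local Notation lam := (@lambda_outer R).
Local Notation M := (lambda_measurable R).
Local Notation lr := (lr R).
Local Notation lr_mono := (@lr_mono R _ _).
Local Notation lr_ge0 := (@lr_ge0 R).
Let mu : {outer_measure set cantor_space -> \bar R} := lam.

Lemma M_bigcup (F : nat -> set cantor_space) : (forall n, M (F n)) -> M (\bigcup_n F n).
Proof. exact: (@caratheodory_measurable_bigcup R cantor_space mu). Qed.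
Lemma M_setC A : M A -> M (~` A).
Proof. exact: (@caratheodory_measurable_setC R cantor_space mu). Qed.
Lemma M_setU A B : M A -> M B -> M (A `|` B).
Proof. exact: (@caratheodory_measurable_setU R cantor_space mu). Qed.
Lemma M_setI A B : M A -> M B -> M (A `&` B).
Proof. exact: (@caratheodory_measurable_setI R cantor_space mu). Qed.
Lemma M_set0 : M set0.
Proof. exact: (@caratheodory_measurable_set0 R cantor_space mu). Qed.
Lemma M_setT : M setT.
Proof. by rewrite -setC0; apply: M_setC; exact: M_set0. Qed.
Lemma M_bigcap (F : nat -> set cantor_space) : (forall n, M (F n)) -> M (\bigcap_n F n).
Proof.
move=> h; rewrite -[X in M X]setCK setC_bigcap; apply: M_setC.
by apply: M_bigcup => n; exact: M_setC.
Qed.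

Lemma lr_split A X : M A -> lr X = (lr (X `&` A) + lr (X `&` ~` A))%R.
Proof. by move=> MA; apply: EFin_inj; rewrite EFinD -!lamE; exact: MA. Qed.

Lemma M_null N : lr N = 0%R -> M N.
Proof.
move=> h; apply: le_caratheodory_measurable => X.
have : lam (X `&` N) <= lam N by apply: le_outer_measure => t [].
rewrite [lam N]lamE h => h1; apply: le_trans (leeD h1 (le_outer_measure mu _ _ (@subIsetl _ X _))) _.
by rewrite add0e.
Qed.

Lemma natinv_small (e : R) : (0 < e)%R -> exists n, (n.+1%:R^-1 < e)%R.
Proof.
move=> e0; case: (near_infty_natSinv_lt (PosNum e0)) => N _ HN.
by exists N; exact: (HN N (leqnn N)).
Qed.

Lemma hull B : exists H, [/\ M H, B `<=` H & lr H = lr B].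
Proof.
have : forall n, exists U, [/\ M U, B `<=` U & (lr U <= lr B + n.+1%:R^-1)%R].
  move=> n; have [s [Bs Hs]] := @lam_adherent R B (n.+1%:R^-1) (ltac:(by rewrite invr_gt0)).
  exists (\bigcup_i cylinder (s i)); split => //.
    by apply: M_bigcup => i; exact: cyl_cara.
  rewrite -lee_fin EFinD -!lamE; apply: le_trans Hs.
  apply: le_trans (outer_measure_sigma_subadditive mu _) _.
  apply: lee_nneseries => [*|i _]; first exact: outer_measure_ge0.
  exact: lam_cyl_le.
move/choice => [U HU].
exists (\bigcap_n U n); split.
- by apply: M_bigcap => n; have [] := HU n.
- by move=> t Bt n _; have [_ + _] := HU n; apply.
apply/eqP; rewrite eq_le; apply/andP; split; last first.
  by apply: lr_mono => t Bt n _; have [_ + _] := HU n; apply.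
apply/ler_addgt0Pr => e e0; have [n hn] := natinv_small e0.
have [_ _ h] := HU n.
apply: (@le_trans _ _ (lr (U n))).
  by apply: lr_mono => t; apply.
apply: le_trans h _; rewrite lerD2l; exact: ltW.
Qed.

Lemma lr_cvg_fin (f : nat -> set cantor_space) (A : set cantor_space) :
  (lam \o f) @ \oo --> lam A ->
  forall e, (0 < e)%R -> exists n, forall m, (n <= m)%N -> (`|lr A - lr (f m)| < e)%R.
Proof.
rewrite lamE (_ : lam \o f = fun n => (lr (f n))%:E); last first.
  by apply: funext => n /=; rewrite lamE.
move=> /fine_cvgP [_ cv] e e0.
move/cvgrPdist_lt : cv => /(_ e e0) [N _ HN].
by exists N => m Nm; exact: HN.
Qed.

Lemma lr_cont_below (B : nat -> set cantor_space) : (forall n, B n `<=` B n.+1) ->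
  forall e, (0 < e)%R -> exists n, (lr (\bigcup_n B n) <= lr (B n) + e)%R.
Proof.
move=> Bnd e e0.
have Bmono k j : (k <= j)%N -> B k `<=` B j.
  move=> /subnK <-; elim: (j - k)%N => [|d IH]; first by rewrite add0n.
  by apply: subset_trans IH (Bnd _).
have [H HH] := @choice _ _ (fun n H => [/\ M H, B n `<=` H & lr H = lr (B n)])
  (fun n => hull (B n)).
pose G k := \bigcap_j (if (k <= j)%N then H j else setT).
have BG k : B k `<=` G k.
  move=> t Bt j _; case: ifP => // kj; have [_ + _] := HH j; apply.
  exact: Bmono kj _ Bt.
have GH k : G k `<=` H k by move=> t Gt; have := Gt k I; rewrite leqnn.
have MG k : M (G k).
  by apply: M_bigcap => j; case: ifP => _; [have [] := HH j|exact: M_setT].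
have lrG k : lr (G k) = lr (B k).
  apply/eqP; rewrite eq_le (lr_mono (BG k)) andbT.
  by have [_ _ <-] := HH k; exact: lr_mono.
have Gnd : nondecreasing_seq G.
  apply/nondecreasing_seqP => n; rewrite subsetEset => t Gt j _.
  case: ifP => // nj; have := Gt j I; rewrite (leq_trans (leqnSn n) nj); apply.
have cv := @nondecreasing_cvg_mu _ (caratheodory_type lam) R
  (mu : {measure set (caratheodory_type lam) -> \bar R}) G MG (M_bigcup MG) Gnd.
have [n hn] := lr_cvg_fin cv e0.
exists n; rewrite -lrG.
apply: (@le_trans _ _ (lr (\bigcup_n G n))).
  by apply: lr_mono => t [k _ Bt]; exists k => //; exact: BG.
have := hn n (leqnn n); rewrite ltr_norml => /andP [_]; lra.
Qed.

Lemma lr_cont_above (K : nat -> set cantor_space) (c : R) :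
  (forall n, M (K n)) -> (forall n, K n.+1 `<=` K n) ->
  (forall n, c <= lr (K n))%R -> (c <= lr (\bigcap_n K n))%R.
Proof.
move=> MK Kni Kc.
have Knd : nonincreasing_seq K.
  by apply/nonincreasing_seqP => n; rewrite subsetEset.
have cv := @nonincreasing_cvg_mu _ (caratheodory_type lam) R
  (mu : {measure set (caratheodory_type lam) -> \bar R}) K
  (ltac:(by rewrite /= lamE ltry)) MK (M_bigcap MK) Knd.
apply/ler_addgt0Pr => e e0.
have [n hn] := lr_cvg_fin cv e0.
have := hn n (leqnn n); rewrite ltr_norml => /andP [h _].
have := Kc n; lra.
Qed.

Lemma M_findep (S : set cantor_space) L :
  (forall t t', (forall i, (i < L)%N -> t i = t' i) -> S t -> S t') -> M S.
Proof.
move=> dep.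
pose D n := if (unpickle n : option (seq bool)) is Some w then
  (if pselect (cylinder w `<=` S) then cylinder w else set0) else set0.
have -> : S = \bigcup_n D n.
  apply/seteqP; split => t.
    move=> St; pose w := mkseq t L.
    have cw : cylinder w `<=` S.
      move=> t' ct'; apply: dep St => i iL.
      by rewrite (ct' i) ?size_mkseq // nth_mkseq.
    exists (pickle w) => //; rewrite /D pickleK; case: pselect => [?|/(_ cw)//].
    by move=> i; rewrite size_mkseq => iL; rewrite nth_mkseq.
  move=> [n _]; rewrite /D; case: (unpickle n) => // w.
  by case: pselect => // h /h.
apply: M_bigcup => n; rewrite /D; case: (unpickle n) => [w|]; last exact: M_set0.
by case: pselect => ?; [exact: cyl_cara|exact: M_set0].
Qed.

Lemma M_inner P : (forall e, (0 < e)%R ->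
   exists K, [/\ M K, K `<=` P & (lr P - e <= lr K)%R]) -> M P.
Proof.
move=> h.
have [K HK] := @choice _ _ (fun n K => [/\ M K, K `<=` P & (lr P - n.+1%:R^-1 <= lr K)%R])
  (fun n => h (n.+1%:R^-1)%R (ltac:(by rewrite invr_gt0))).
set G := \bigcup_n K n.
have MG : M G by apply: M_bigcup => n; have [] := HK n.
have GP : G `<=` P by move=> t [n _]; have [_ + _] := HK n; apply.
have lrG : (lr P <= lr G)%R.
  apply/ler_addgt0Pr => e e0; have [n hn] := natinv_small e0.
  have [_ _ h1] := HK n.
  have : (lr (K n) <= lr G)%R by apply: lr_mono => t Kt; exists n.
  move=> hKG; move: hn h1; set q := (n.+1%:R^-1)%R => hn h1; lra.
have [H [MH PH lrH]] := hull P.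
have hs := lr_split H MG.
rewrite (setIidr (subset_trans GP PH)) in hs.
have n0 : lr (P `&` ~` G) = 0%R.
  apply/eqP; rewrite eq_le lr_ge0 andbT.
  have : (lr (P `&` ~` G) <= lr (H `&` ~` G))%R.
    by apply: lr_mono => t [Pt nG]; split => //; exact: PH.
  lra.
have -> : P = G `|` (P `&` ~` G).
  apply/seteqP; split => t; last by case => [/GP|[]].
  by move=> Pt; case: (pselect (G t)) => Gt; [left|right].
by apply: M_setU => //; exact: M_null.
Qed.

End Meas.

Definition pref (σ : baire_space) L := [set g : baire_space | forall i, (i < L)%N -> g i = σ i].

Lemma pref_filter (σ : baire_space) : Filter (filter_from setT (pref σ)).
Proof.
apply: filter_from_filter; first by exists 0%N.
move=> i j _ _; exists (maxn i j) => //; rewrite subsetI; split => g Hg k kl; apply: Hg.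
  exact: leq_trans kl (leq_maxl _ _).
exact: leq_trans kl (leq_maxr _ _).
Qed.

Lemma baire_prefix (σ : baire_space) : filter_from setT (pref σ) --> σ.
Proof.
have FF := pref_filter σ.
apply/(@pointwise_cvgP nat nat _ σ FF) => t.
move=> U /nbhs_singleton Ut; exists t.+1 => // g Hg /=; rewrite Hg //.
Qed.

Lemma cont_local (f : baire_space -> cantor_space) : continuous f ->
  forall σ n, exists L, forall σ', (forall i, (i < L)%N -> σ' i = σ i) -> f σ' n = f σ n.
Proof.
move=> cf σ n.
have FF := pref_filter σ.
have cv : f @ filter_from setT (pref σ) --> f σ.
  have h1 := cvg_app f (@baire_prefix σ).
  have h2 := cf σ.
  exact: cvg_trans h1 h2.
have U : nbhs (f σ) [set u : cantor_space | u n = f σ n].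
  apply: open_nbhs_nbhs; split => //.
  have -> : [set u : cantor_space | u n = f σ n] = proj n @^-1` [set f σ n] by [].
  apply: open_comp; last exact: discrete_open.
  by move=> t _; exact: proj_continuous.
have [L _ HL] := cv _ U.
by exists L => σ' H; exact: HL.
Qed.

Fixpoint iterc (g : seq nat -> nat) n : seq nat :=
  if n is n'.+1 then rcons (iterc g n') (g (iterc g n')) else [::].

Lemma size_iterc g n : size (iterc g n) = n.
Proof. by elim: n => //= n IH; rewrite size_rcons IH. Qed.

Lemma nth_iterc g n i : (i < n)%N -> nth 0%N (iterc g n) i = nth 0%N (iterc g i.+1) i.
Proof.
elim: n => // n IH; rewrite ltnS leq_eqVlt => /orP [/eqP ->//|iN].
by rewrite /= nth_rcons size_iterc iN IH.
Qed.

Section Lusin.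
Variable R : realType.
Variables (psi : cantor_space -> cantor_space) (f : baire_space -> cantor_space).
Hypothesis hpsi : forall j, exists L, forall t t' : cantor_space,
  (forall i, (i < L)%N -> t i = t' i) -> forall n, (n < j)%N -> psi t n = psi t' n.
Hypothesis cf : continuous f.
Local Notation M := (lambda_measurable R).
Local Notation lr := (lr R).

Lemma konig (k : nat -> nat) (t : cantor_space) :
  (forall j, exists σ : baire_space, (forall i, (i < j)%N -> (σ i <= k i)%N) /\
     forall n, (n < j)%N -> psi t n = f σ n) ->
  exists σ, psi t = f σ.
Proof.
move=> h; have [S hS] := choice h.
pose Inv (p : seq nat) := forall J, exists j, (J <= j)%N /\
  forall i, (i < size p)%N -> S j i = nth 0%N p i.
have ext : forall p, exists v, Inv p -> Inv (rcons p v).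
  move=> p; case: (pselect (Inv p)) => Ip; last by exists 0%N.
  case: (pselect (exists v, Inv (rcons p v))) => [[v Iv]|nI]; first by exists v.
  exfalso.
  have hJ : forall v, exists J, forall j, (J <= j)%N ->
      ~ (forall i, (i < (size p).+1)%N -> S j i = nth 0%N (rcons p v) i).
    move=> v; apply: contrapT => hv; apply: nI; exists v => J.
    apply: contrapT => hJ'; apply: hv; exists J => j Jj ag; apply: hJ'.
    by exists j; split => //; rewrite size_rcons.
  have [Jf hJf] := choice hJ.
  set n := size p.
  pose J := maxn n.+1 (\max_(v < (k n).+1) Jf v).
  have [j [Jj ag]] := Ip J.
  have nj : (n < j)%N := leq_trans (leq_maxl _ _) Jj.
  have vb : (S j n < (k n).+1)%N by rewrite ltnS; exact: (hS j).1 n nj.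
  apply: (hJf (S j n) j).
    apply: leq_trans _ Jj; apply: leq_trans (leq_maxr _ _).
    exact: (leq_bigmax (Ordinal vb)).
  move=> i; rewrite ltnS leq_eqVlt => /orP [/eqP ->|il]; rewrite nth_rcons.
    by rewrite ltnn eqxx.
  by rewrite il; exact: ag.
have [gx hgx] := choice ext.
pose pp := iterc gx.
have Ipp : forall n, Inv (pp n).
  elim => [|n IH] /=; first by move=> J; exists J; split => // i; rewrite ltn0.
  exact: hgx.
pose σ : baire_space := fun i => nth 0%N (pp i.+1) i.
exists σ; apply: funext => n.
have [L HL] := cont_local cf σ n.
have [j [nj ag]] := Ipp L n.+1.
rewrite size_iterc in ag.
have e1 : f (S j) n = f σ n.
  by apply: HL => i iL; rewrite ag // /σ /pp nth_iterc.
by rewrite -e1; exact: (hS j).2 n nj.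
Qed.

Definition Pb (b : seq nat) := [set t : cantor_space | exists σ : baire_space,
  (forall i, (i < size b)%N -> (σ i <= nth 0%N b i)%N) /\ psi t = f σ].

Lemma Pb_union b : Pb b = \bigcup_m Pb (rcons b m).
Proof.
apply/seteqP; split => t.
  move=> [σ [hb e]]; exists (σ (size b)) => //; exists σ; split => // i.
  rewrite size_rcons ltnS leq_eqVlt nth_rcons => /orP [/eqP ->|il].
    by rewrite ltnn eqxx.
  by rewrite il; exact: hb.
move=> [m _ [σ [hb e]]]; exists σ; split => // i il.
by have := hb i; rewrite size_rcons nth_rcons il; apply; exact: ltnW.
Qed.

Lemma Pb_mono b m : Pb (rcons b m) `<=` Pb (rcons b m.+1).
Proof.
move=> t [σ [hb e]]; exists σ; split => // i; have := hb i.
rewrite !size_rcons !nth_rcons; case: ifP => // _; case: ifP => // _ h /h.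
by move=> /leq_trans; apply.
Qed.

Lemma lusin : M [set t | exists σ, psi t = f σ].
Proof.
apply: M_inner => e e0.
have hs : forall b : seq nat, exists m,
    (lr (Pb b) <= lr (Pb (rcons b m)) + e * ((2:R)^-1)^+(size b).+1)%R.
  move=> b; rewrite {1}Pb_union; apply: lr_cont_below; first exact: Pb_mono.
  by apply: mulr_gt0 => //; apply: exprn_gt0; rewrite invr_gt0.
have [g hg] := choice hs.
pose B := iterc g.
have inv : forall j, (lr [set t | exists σ, psi t = f σ] <=
    lr (Pb (B j)) + e - e * ((2:R)^-1)^+j)%R.
  elim => [|j IH].
    have -> : Pb (B 0%N) = [set t | exists σ, psi t = f σ].
      apply/seteqP; split => t [σ]; first by case=> _ ?; exists σ.
      by move=> ?; exists σ; split => // i; rewrite ltn0.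
    rewrite expr0 mulr1; lra.
  have := hg (B j); rewrite size_iterc exprS => h.
  have : (0 <= ((2:R)^-1)^+j)%R by apply: exprn_ge0; rewrite invr_ge0.
  move: IH h; rewrite /B /=; set x := (((2:R)^-1)^+j)%R; lra.
pose k i := nth 0%N (B i.+1) i.
pose K j := [set t : cantor_space | exists σ : baire_space,
  (forall i, (i < j)%N -> (σ i <= k i)%N) /\ forall n, (n < j)%N -> psi t n = f σ n].
have PK j : Pb (B j) `<=` K j.
  move=> t [σ [hb e1]]; exists σ; split; last by rewrite e1.
  by move=> i ij; have := hb i; rewrite /B size_iterc /k (nth_iterc g ij); apply.
have MK j : M (K j).
  have [L HL] := hpsi j.
  apply: (@M_findep R _ L) => t t' ag [σ [hb h]]; exists σ; split => // n nj.
  by rewrite -(HL t t' ag n nj); exact: h.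
have Kdec j : K j.+1 `<=` K j.
  move=> t [σ [hb h]]; exists σ; split => [i ij|n nj].
    by apply: hb; exact: ltnW.
  by apply: h; exact: ltnW.
exists (\bigcap_j K j); split.
- exact: M_bigcap.
- move=> t Kt; apply: (@konig k) => j; exact: Kt j I.
apply: lr_cont_above => // j.
have x0 : (0 <= ((2:R)^-1)^+j)%R by apply: exprn_ge0; rewrite invr_ge0.
have := inv j; have := lr_mono R (PK j).
have : (0 <= e * ((2:R)^-1)^+j)%R by apply: mulr_ge0 => //; exact: ltW.
set x := (e * ((2:R)^-1)^+j)%R; lra.
Qed.

End Lusin.

Definition ei {R : realType} (k : nat) : R := (k.+1%:R)^-1.

Section ICauchy.
Variable R : realType.
Variable X : completeNormedModType R.
Variable I : set (set nat).
Hypothesis hI : is_ideal I.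
Local Notation ei := (@ei R).

Lemma ei_gt0 k : (0 : R) < ei k.
Proof. by rewrite /ei invr_gt0. Qed.

Lemma ei_anti k j : (k <= j)%N -> (ei j : R) <= ei k.
Proof. by move=> kj; rewrite /ei lef_pV2 ?posrE ?ltr0n // ler_nat. Qed.

Lemma ei_small (e : R) : 0 < e -> exists k, ei k < e.
Proof. exact: natinv_small. Qed.

Lemma I_sub A B : B `<=` A -> I A -> I B.
Proof. by case: hI => _ h _ _; exact: h. Qed.
Lemma I_U A B : I A -> I B -> I (A `|` B).
Proof. by case: hI => h _ _ _; exact: h. Qed.
Lemma I_notT A : I A -> exists n, ~ A n.
Proof.
move=> IA; case: hI => _ _ hT _; apply: contrapT => h; apply: hT.
suff e : A = setT by rewrite -e.
by apply/seteqP; split => // n _; apply: contrapT => nA; apply: h; exists n.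
Qed.
Lemma I_fin n : I [set i | (i < n)%N].
Proof. by case: hI => _ _ _ h; apply: h; exact: finite_II. Qed.

Lemma icauchy (y : nat -> X) :
  (exists l, I_converges_to I y l) <->
  (forall k, exists m, I [set n | ei k < `|y n - y m|]).
Proof.
split.
  move=> [l hl] k.
  have e2 : 0 < ei k / 2 by rewrite divr_gt0 // ei_gt0.
  have [m hm] := I_notT (hl _ e2).
  exists m; apply: I_sub (hl _ e2) => n /= hn.
  rewrite /= in hm; have hm' : `|y m - l| <= ei k / 2 by rewrite leNgt; apply/negP.
  apply: contrapT => hnl; have hnl' : `|y n - l| <= ei k / 2 by rewrite leNgt; apply/negP.
  have := ler_distD l (y n) (y m); rewrite (distrC l) => h.
  move: hn hm' hnl' h; set a := ei k; lra.
move=> h; have [m hm] := choice h.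
pose z k := y (m k).
have zc j k : `|z j - z k| <= ei j + ei k.
  have [n hn] := I_notT (I_U (hm j) (hm k)).
  have h1 : `|y n - z j| <= ei j.
    by rewrite leNgt; apply/negP => ?; apply: hn; left.
  have h2 : `|y n - z k| <= ei k.
    by rewrite leNgt; apply/negP => ?; apply: hn; right.
  have := ler_distD (y n) (z j) (z k); rewrite (distrC (z j) (y n)) => h3.
  move: h1 h2 h3; set a := ei j; set b := ei k; lra.
have cz : cvg (z @ \oo).
  apply: cauchy_cvg; apply: cauchy_exP => e e0.
  have e2 : 0 < e / 2 by rewrite divr_gt0.
  have [k hk] := ei_small e2.
  exists (z k); exists k => // j /= kj; rewrite -ball_normE /=.
  have := zc k j; have := ei_anti kj; move: hk; set a := ei k; set b := ei j; lra.
set l := lim (z @ \oo).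
exists l => e e0.
have e4 : 0 < e / 4 by rewrite divr_gt0.
have [k hk] := ei_small e4.
move/cvgrPdist_lt : cz => /(_ _ (ei_gt0 k)) [N _ HN].
set j := maxn N k.
have h1 : `|l - z j| < ei k by apply: HN; exact: leq_maxl.
have h2 := zc k j.
have h3 := ei_anti (leq_maxr N k : (k <= j)%N).
apply: I_sub (hm k) => n /= hn.
apply: contrapT => hnk; have hnk' : `|y n - z k| <= ei k by rewrite leNgt; apply/negP.
have := ler_distD (z k) (y n) l; have := ler_distD (z j) (z k) l.
rewrite (distrC (z j) l).
move: h1 h2 h3 hnk' hn hk; set a := ei k; set b := ei j; lra.
Qed.

End ICauchy.

Section Series.
Variable R : realType.
Variable X : completeNormedModType R.
Variable I : set (set nat).
Hypothesis hI : is_ideal I.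

Lemma ps_S (y : nat -> X) n : partial_sums y n.+1 = partial_sums y n + y n.+1.
Proof. by rewrite /partial_sums big_ord_recr. Qed.
Lemma ps_0 (y : nat -> X) : partial_sums y 0 = y 0%N.
Proof. by rewrite /partial_sums big_ord1. Qed.

Lemma S_dep (x : nat -> X) (t t' : cantor_space) n :
  (forall i, (i <= n)%N -> t i = t' i) ->
  partial_sums (fun k => (t k)%:R *: x k) n = partial_sums (fun k => (t' k)%:R *: x k) n.
Proof.
move=> h; rewrite /partial_sums; apply: eq_bigr => i _.
by rewrite h // -ltnS ltn_ord.
Qed.

Lemma S_flip (x : nat -> X) (t t' : cantor_space) j :
  (forall i, i != j -> t' i = t i) -> forall n,
  partial_sums (fun k => (t' k)%:R *: x k) n =
  partial_sums (fun k => (t k)%:R *: x k) n +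
    (if (j <= n)%N then ((t' j)%:R - (t j)%:R) *: x j else 0).
Proof.
move=> ht; elim => [|n IH].
  rewrite !ps_0 leqn0; case: eqP => [->|/eqP j0].
    by rewrite scalerBl addrC subrK.
  by rewrite addr0 (ht 0%N) // eq_sym.
rewrite !ps_S IH.
case: (ltngtP j n.+1) => [jn|jn|jn].
- rewrite ltnS in jn; rewrite jn (ht n.+1); first by rewrite addrAC.
  by rewrite neq_ltn ltnS jn orbT.
- rewrite leqNgt (ltnW jn) /= !addr0 (ht n.+1) //.
  by rewrite neq_ltn jn.
- rewrite jn ltnn addr0 -!addrA; congr (_ + _).
  by rewrite scalerBl addrC subrK.
Qed.

Lemma Iconv_shift (y y' : nat -> X) c j l : (forall n, (j <= n)%N -> y' n = y n + c) ->
  I_converges_to I y l -> I_converges_to I y' (l + c).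
Proof.
move=> h hl e e0; apply: (I_sub hI) (I_U hI (hl e e0) (I_fin hI j)) => n /= hn.
case: (ltnP n j) => [nj|jn]; [by right|left].
by move: hn; rewrite h // opprD addrACA subrr addr0.
Qed.

Lemma Iconv_add (y y1 y2 : nat -> X) l1 l2 : (forall n, y n = y1 n + y2 n) ->
  I_converges_to I y1 l1 -> I_converges_to I y2 l2 -> I_converges_to I y (l1 + l2).
Proof.
move=> h h1 h2 e e0.
have e2 : 0 < e / 2 by rewrite divr_gt0.
apply: (I_sub hI) (I_U hI (h1 _ e2) (h2 _ e2)) => n /= hn.
apply: contrapT => hn'.
have a1 : `|y1 n - l1| <= e / 2 by rewrite leNgt; apply/negP => ?; apply: hn'; left.
have a2 : `|y2 n - l2| <= e / 2 by rewrite leNgt; apply/negP => ?; apply: hn'; right.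
move: hn; rewrite h opprD addrACA => hn.
have := ler_normD (y1 n - l1) (y2 n - l2).
move: a1 a2 hn; set u := `|_ + _|; lra.
Qed.

Definition Aset (x : nat -> X) := [set t : cantor_space |
   I_convergent_series I (fun n => (t n)%:R *: x n)].

Lemma A_flip (x : nat -> X) (t t' : cantor_space) j :
  (forall i, i != j -> t' i = t i) -> Aset x t -> Aset x t'.
Proof.
move=> ht [l hl]; exists (l + ((t' j)%:R - (t j)%:R) *: x j).
apply: (Iconv_shift (j := j)) hl => n jn.
by rewrite (S_flip x ht) jn.
Qed.

Lemma A_refl (x : nat -> X) (t : cantor_space) :
  Aset x t -> Aset x (xr (fun=> true) t) -> I_convergent_series I x.
Proof.
move=> [l1 h1] [l2 h2]; exists (l1 + l2); apply: Iconv_add h1 h2 => n.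
rewrite /partial_sums -big_split; apply: eq_bigr => i _.
rewrite /= -scalerDl /xr; case: (t i) => /=; by rewrite ?mulr1n ?mulr0n ?add0r ?addr0 scale1r.
Qed.

End Series.

Unset Implicit Arguments.

Theorem theorem4p1 (R : realType) (X : completeNormedModType R)
  (I : set (set nat)) (x : nat -> X) :
  is_ideal I ->
  analytic (ideal_code I) \/ coanalytic (ideal_code I) ->
  let A := [set t : cantor_space |
              I_convergent_series I (fun n => (t n)%:R *: x n)] in
  [/\ lambda_measurable R A,
      (lambda_outer R A = (0%R)%:E \/ lambda_outer R A = (1%R)%:E) &
      (~ I_convergent_series I x -> lambda_outer R A = (0%R)%:E)].
Proof.
move=> hI hIc A.
pose S (t : cantor_space) := partial_sums (fun n => (t n)%:R *: x n).
pose psi k m (t : cantor_space) : cantor_space := fun n => @ei R k < `|S t n - S t m|.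
have hpsi k m : forall j, exists L, forall t t' : cantor_space,
    (forall i, (i < L)%N -> t i = t' i) ->
    forall n, (n < j)%N -> psi k m t n = psi k m t' n.
  move=> j; exists (j + m.+1)%N => t t' ag n nj.
  have e1 : S t n = S t' n.
    apply: S_dep => i iN; apply: ag; apply: leq_trans (leq_addr _ _).
    exact: leq_ltn_trans iN nj.
  have e2 : S t m = S t' m.
    apply: S_dep => i im; apply: ag.
    by apply: leq_trans (leq_addl _ _); rewrite ltnS.
  by rewrite /psi e1 e2.
have Aeq : A = \bigcap_k \bigcup_m (psi k m @^-1` ideal_code I).
  apply/seteqP; split => t.
    move=> /(icauchy hI) h k _; have [m hm] := h k; by exists m.
  move=> h; apply/(icauchy hI) => k; have [m _ hm] := h k Logic.I; by exists m.
have MA : lambda_measurable R A.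
  rewrite Aeq; apply: M_bigcap => k; apply: M_bigcup => m.
  case: hIc => [[->|[f [cf ->]]]|[hc|[f [cf hc]]]].
  - rewrite preimage_set0; exact: M_set0.
  - have -> : psi k m @^-1` (f @` setT) = [set t | exists σ, psi k m t = f σ].
      apply/seteqP; split => t /=.
        by move=> [σ _ e]; exists σ; rewrite e.
      by move=> [σ e]; exists σ => //; rewrite e.
    exact: lusin (hpsi k m) cf.
  - have -> : ideal_code I = setT.
      by rewrite -(setCK (ideal_code I)) hc setC0.
    rewrite preimage_setT; exact: M_setT.
  - have -> : psi k m @^-1` ideal_code I = ~` [set t | exists σ, psi k m t = f σ].
      apply/seteqP; split => t /=.
        move=> h [σ e]; have : (~` ideal_code I) (psi k m t) by rewrite hc; exists σ.
        by apply.
      move=> h; apply: contrapT => h2.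
      have : (~` ideal_code I) (psi k m t) by [].
      by rewrite hc => -[σ _ e]; apply: h; exists σ.
    by apply: M_setC; exact: lusin (hpsi k m) cf.
have Ainv : forall j, xr (ej j) @^-1` A = A.
  move=> j; apply/seteqP; split => t /=.
    move=> h; apply: (A_flip hI (t := xr (ej j) t) (j := j)) h => i ij.
    by rewrite /xr /ej (negbTE ij) addbF.
  move=> h; apply: (A_flip hI (j := j)) h => i ij.
  by rewrite /xr /ej (negbTE ij) addbF.
have zo := zero_one R Ainv.
split => //.
move=> nx; case: zo => // h1; exfalso; apply: nx.
pose r : cantor_space := fun=> true.
have lA : lr R A = 1%R by apply: EFin_inj; rewrite -lamE h1.
have lnA : lr R (~` A) = 0%R.
  have := lr_split setT MA; rewrite !setTI.
  have -> : lr R setT = 1%R by apply: EFin_inj; rewrite -lamE lam_setT.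
  rewrite lA; lra.
have [t [At Art]] : exists t, A t /\ A (xr r t).
  apply: contrapT => hne.
  have sub : xr r @^-1` A `<=` ~` A by move=> t /= Ah At; apply: hne; exists t.
  have := lr_mono R sub; rewrite lnA.
  have -> : lr R (xr r @^-1` A) = 1%R by rewrite /lr lam_xr h1.
  lra.
exact: (A_refl hI At Art).
Qed.
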